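(* Let $n$ be a natural number with prime factorisation $n=p_1^{\alpha_1}\cdots p_t^{\alpha_t}$. The following are equivalent: (1) every sb-solution of cardinality $n$ is a flip solution; (2) every skew brace of order $n$ is a trivial brace; (3) every skew brace of order $n$ is trivial; (4) every skew brace of order $n$ is almost trivial; (5) every skew brace of order $n$ is weakly trivial; (6) every skew brace of order $n$ is one-generator; (7) $\alpha_i=1$ for every $i$, and $p_i$ does not divide $p_j-1$ for all $i\neq j$.
   Context: A skew brace is a set $A$ with two group structures $(A,+)$ and $(A,\circ)$ such that $a\circ(b+c)=a\circ b-a+a\circ c$ for all $a,b,c\in A$; its order is $|A|$. It is a brace if $(A,+)$ is abelian. Put $\lambda_a(b)=-a+a\circ b$ and $a*b=-a+a\circ b-b$. $A$ is trivial if $a\circ b=a+b$ for all $a,b$; almost trivial if $a\circ b=b+a$ for all $a,b$. Let $A^2$ be the subgroup of $(A,+)$ generated by all $a*b$, and let $A_{\mathrm{op}}=(A,+_{\mathrm{op}},\circ)$ with $a+_{\mathrm{op}}b=b+a$ (the opposite skew brace), with $A_{\mathrm{op}}^2$ defined analogously using $+_{\mathrm{op}}$; $A$ is weakly trivial if $A^2\cap A_{\mathrm{op}}^2=\{0\}$. A sub-skew brace is a subset that is a subgroup of both $(A,+)$ and $(A,\circ)$; $A$ is one-generator if there is $a\in A$ such that the smallest sub-skew brace containing $a$ is $A$. A (non-degenerate set-theoretic) solution of the Yang--Baxter equation is a pair $(X,r)$ with $r(x,y)=(\lambda_x(y),\rho_y(x))$ a bijection of $X\times X$ satisfying $r_{12}r_{23}r_{12}=r_{23}r_{12}r_{23}$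 ($r_{12}=r\times\mathrm{id}_X$, $r_{23}=\mathrm{id}_X\times r$) with all $\lambda_x,\rho_x$ bijective. An sb-solution of cardinality $n$ is a solution isomorphic to $(A,r_A)$ for a skew brace $A$ of order $n$, where $r_A(a,b)=(\lambda_a(b),\lambda_a(b)^{-1}\circ a\circ b)$ (inverse in $(A,\circ)$). A flip solution is one with $r(x,y)=(y,x)$ for all $x,y$. *)

(* Defs.v *)
From mathcomp Require Import all_boot.
Set Implicit Arguments. Unset Strict Implicit. Unset Printing Implicit Defensive.

Record skew_brace (T : Type) := SkewBrace {
  sb_add : T -> T -> T;
  sb_zero : T;
  sb_opp : T -> T;
  sb_comp : T -> T -> T;
  sb_one : T;
  sb_inv : T -> T;
  sb_addA : forall a b c, sb_add a (sb_add b c) = sb_add (sb_add a b) c;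
  sb_add0 : forall a, sb_add sb_zero a = a;
  sb_addN : forall a, sb_add (sb_opp a) a = sb_zero;
  sb_compA : forall a b c, sb_comp a (sb_comp b c) = sb_comp (sb_comp a b) c;
  sb_comp1 : forall a, sb_comp sb_one a = a;
  sb_compV : forall a, sb_comp (sb_inv a) a = sb_one;
  sb_compatible : forall a b c,
    sb_comp a (sb_add b c) = sb_add (sb_add (sb_comp a b) (sb_opp a)) (sb_comp a c)
}.

Section SkewBraceDefs.
Variables (T : Type) (A : skew_brace T).
Local Notation "a + b" := (sb_add A a b).
Local Notation "- a" := (sb_opp A a).
Local Notation "a \o b" := (sb_comp A a b).

Definition sb_lambda (a b : T) : T := - a + (a \o b).

Definition star_with (add : T -> T -> T) (opp : T -> T) (a b : T) : T :=
  add (add (opp a) (sb_comp A a b)) (opp b).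

Inductive sq_with (add : T -> T -> T) (opp : T -> T) (zero : T) : T -> Prop :=
  | sq_gen a b : sq_with add opp zero (star_with add opp a b)
  | sq_zero : sq_with add opp zero zero
  | sq_add x y : sq_with add opp zero x -> sq_with add opp zero y ->
                 sq_with add opp zero (add x y)
  | sq_opp x : sq_with add opp zero x -> sq_with add opp zero (opp x).

Definition sb_sq : T -> Prop := sq_with (sb_add A) (sb_opp A) (sb_zero A).
(* A_op^2 : same, for the opposite skew brace (a +op b = b + a; same
   inverse and zero) *)
Definition sb_op_sq : T -> Prop :=
  sq_with (fun a b => sb_add A b a) (sb_opp A) (sb_zero A).

Definition sb_is_brace : Prop := forall a b, a + b = b + a.
Definition sb_trivial : Prop := forall a b, a \o b = a + b.
Definition sb_trivial_brace : Prop := sb_is_brace /\ sb_trivial.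
Definition sb_almost_trivial : Prop := forall a b, a \o b = b + a.
Definition sb_weakly_trivial : Prop :=
  forall x, sb_sq x -> sb_op_sq x -> x = sb_zero A.

Definition sub_skew_brace (S : T -> Prop) : Prop :=
  [/\ S (sb_zero A), (forall x y, S x -> S y -> S (x + y)) &
      (forall x, S x -> S (- x))] /\
  [/\ S (sb_one A), (forall x y, S x -> S y -> S (x \o y)) &
      (forall x, S x -> S (sb_inv A x))].

Definition sb_one_generator : Prop :=
  exists a : T, forall S, sub_skew_brace S -> S a -> forall x, S x.

Definition sb_solution (p : T * T) : T * T :=
  let: (a, b) := p in
  (sb_lambda a b, sb_comp A (sb_comp A (sb_inv A (sb_lambda a b)) a) b).

End SkewBraceDefs.

Definition r12 (X : Type) (r : X * X -> X * X) (t : X * X * X) : X * X * X :=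
  let: (x, y, z) := t in let: (u, v) := r (x, y) in (u, v, z).
Definition r23 (X : Type) (r : X * X -> X * X) (t : X * X * X) : X * X * X :=
  let: (x, y, z) := t in let: (u, v) := r (y, z) in (x, u, v).

(* non-degenerate set-theoretic solution; r(x,y) = (lambda_x(y), rho_y(x)) *)
Definition is_solution (X : Type) (r : X * X -> X * X) : Prop :=
  [/\ bijective r,
      (forall t, r12 r (r23 r (r12 r t)) = r23 r (r12 r (r23 r t))),
      (forall x, bijective (fun y => (r (x, y)).1)) &
      (forall y, bijective (fun x => (r (x, y)).2))].

Definition sol_iso (X Y : Type) (r : X * X -> X * X) (s : Y * Y -> Y * Y) :=
  exists f : X -> Y, bijective f /\
    forall x y, s (f x, f y) = (f (r (x, y)).1, f (r (x, y)).2).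

Definition sb_solution_of_card (n : nat) (X : Type) (r : X * X -> X * X) :=
  is_solution r /\
  exists (T : finType) (A : skew_brace T), #|T| = n /\ sol_iso r (sb_solution A).

Definition flip_solution (X : Type) (r : X * X -> X * X) : Prop :=
  forall x y, r (x, y) = (y, x).

(* Main.v *)
Require Import Defs.
From HB Require Import structures.
From mathcomp Require Import all_boot all_fingroup all_solvable all_algebra.
From mathcomp Require Import ring zify.
From mathcomp Require vcharacter.
From Stdlib Require Import Classical.
Set Implicit Arguments. Unset Strict Implicit. Unset Printing Implicit Defensive.


Definition good (n : nat) : Prop :=
  (forall p, prime p -> p %| n -> logn p n = 1) /\
  (forall p q, prime p -> prime q -> p %| n -> q %| n -> p != q -> ~~ (p %| q.-1)).

Lemma good_dvd n d : 0 < n -> good n -> d %| n -> good d.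
Proof.
move=> n0 [g1 g2] dn; have d0 : 0 < d by apply: dvdn_gt0 dn.
split.
  move=> p pp pd; apply/eqP; rewrite eqn_leq; apply/andP; split.
    by rewrite -(g1 p pp (dvdn_trans pd dn)) dvdn_leq_log.
  by rewrite logn_gt0 mem_primes pp d0 pd.
move=> p q pp qp pd qd; apply: g2 => //; exact: dvdn_trans dn.
Qed.

Lemma good_coprime n d : 0 < n -> good n -> d %| n -> coprime n (totient d).
Proof.
move=> n0 [g1 g2] dn; have d0 : 0 < d by apply: dvdn_gt0 dn.
rewrite /coprime; apply/negPn/negP => ne1.
have g0 : 0 < gcdn n (totient d) by rewrite gcdn_gt0 n0.
have g1' : 1 < gcdn n (totient d) by rewrite ltn_neqAle eq_sym ne1 g0.
have rp : prime (pdiv (gcdn n (totient d))) := pdiv_prime g1'.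
have rdv := pdiv_dvd (gcdn n (totient d)).
have rn : pdiv (gcdn n (totient d)) %| n := dvdn_trans rdv (dvdn_gcdl _ _).
have rt : pdiv (gcdn n (totient d)) %| totient d := dvdn_trans rdv (dvdn_gcdr _ _).
move: (pdiv (gcdn n (totient d))) rp rn rt => r rp rn.
rewrite totientE // Euclid_dvd_prod // big_has => /hasP [p].
rewrite mem_primes => /and3P [pp _ pd].
have lp : logn p d = 1 by rewrite (proj1 (good_dvd n0 (conj g1 g2) dn)).
rewrite lp expn0 muln1 => rp1.
have [rq | rq] := eqVneq r p.
  subst r; move: rp1; have p1 : 0 < p.-1 by rewrite -ltnS prednK ?prime_gt1 ?prime_gt0.
  move/(dvdn_leq p1); rewrite leqNgt.
  by rewrite -{2}(prednK (prime_gt0 pp)) ltnSn.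
by move: (g2 r p rp pp rn (dvdn_trans pd dn) rq); rewrite rp1.
Qed.

Section GroupThm.
Local Open Scope group_scope.

Lemma abelian_good_cyclic (gT : finGroupType) (G : {group gT}) :
  abelian G -> good #|G| -> cyclic G.
Proof.
move=> abG [g1 _]; apply: nil_Zgroup_cyclic (abelian_nil abG).
apply/forall_inP => V /SylowP [p pp sylV].
have cV := card_Hall sylV; rewrite p_part in cV.
have [pd | npd] := boolP (p %| #|G|).
  by apply: prime_cyclic; rewrite cV g1.
have : logn p #|G| = 0.
  apply/eqP; rewrite -leqn0 leqNgt logn_gt0 mem_primes pp cardG_gt0 /=.
  by rewrite (negPf npd).
move=> l0; rewrite l0 expn0 in cV.
by rewrite (card1_trivg cV) cyclic1.
Qed.

Lemma norm_cyc_ab (gT : finGroupType) (G H : {group gT}) :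
  H <| G -> cyclic H -> cyclic (G / H) -> coprime #|G| (totient #|H|) -> abelian G.
Proof.
move=> /andP [sHG nHG] cH cGH cop.
apply: (cyclic_factor_abelian _ cGH).
have c1 : #|conj_aut H @* G| = 1%N.
  apply/eqP; rewrite -dvdn1 -(eqnP cop) dvdn_gcd dvdn_morphim /=.
  by rewrite -(card_Aut_cyclic cH) cardSg // Aut_conj_aut.
have : G \subset 'ker (conj_aut H).
  have t := card1_trivg c1.
  apply/subsetP => x Gx; have Nx := subsetP nHG x Gx.
  by apply/kerP => //; have := mem_morphim (conj_aut H) Nx Gx; rewrite t => /set1P.
rewrite ker_conj_aut => sGC.
by rewrite subsetI sHG centsC.
Qed.

End GroupThm.

Section Main.
Local Open Scope group_scope.

Lemma quot_good (gT : finGroupType) (G N : {group gT}) :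
  N <| G -> good #|G| -> good #|G / N|.
Proof.
move=> nNG gG; apply: good_dvd (cardG_gt0 G) gG _.
by rewrite card_quotient ?normal_norm // dvdn_indexg.
Qed.

Lemma key_step (gT : finGroupType) (G N : {group gT}) :
  (forall (gT' : finGroupType) (H : {group gT'}), #|H| < #|G| -> good #|H| -> cyclic H) ->
  N <| G -> N :!=: 1 -> N \proper G -> good #|G| -> cyclic G.
Proof.
move=> IH nNG ntN pNG gG.
have sNG := proper_sub pNG.
have cN : cyclic N.
  by apply: IH (proper_card pNG) (good_dvd (cardG_gt0 G) gG (cardSg sNG)).
have cQ : cyclic (G / N).
  by apply: IH (ltn_quotient ntN sNG) (quot_good nNG gG).
apply: (abelian_good_cyclic _ gG).
apply: norm_cyc_ab nNG cN cQ _.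
exact: good_coprime (cardG_gt0 G) gG (cardSg sNG).
Qed.

Theorem good_cyclic k : forall (gT : finGroupType) (G : {group gT}),
  #|G| <= k -> good #|G| -> cyclic G.
Proof.
elim: k => [|k IHk] gT G.
  by rewrite leqNgt cardG_gt0.
move=> leG gG.
have IH : forall (gT' : finGroupType) (H : {group gT'}), #|H| < #|G| -> good #|H| -> cyclic H.
  by move=> gT' H ltH gH; apply: IHk gH; rewrite -ltnS (leq_trans ltH leG).
have [//|ncG] := boolP (cyclic G).
have [Z1|ntZ] := eqVneq 'Z(G) (1 : {set gT}); last first.
  have cQ : cyclic (G / 'Z(G)).
    by apply: IH (ltn_quotient ntZ (center_sub G)) (quot_good (center_normal G) gG).
  have abG := cyclic_center_factor_abelian cQ.
  by rewrite (abelian_good_cyclic abG gG) in ncG.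
have [G1|ntG] := eqVneq (G : {set gT}) 1.
  by rewrite G1 cyclic1 in ncG.
have [x Gx ntx] := trivgPn _ ntG.
have px : <[x]> \proper G.
  rewrite properEneq cycle_subG Gx andbT; apply: contra ncG => /eqP <-.
  exact: cycle_cyclic.
have [M maxM sxM] := maxgroup_exists (gP := fun H : {group gT} => H \proper G) px.
have [propM maxM'] := maxgroupP maxM.
have sMG := proper_sub propM.
have Mx : x \in M by rewrite -cycle_subG.
have ntM : M :!=: 1 by apply/trivgPn; exists x.
have [nMG|nnMG] := boolP (M <| G).
  by rewrite (key_step IH nMG ntM propM gG) in ncG.
have cM : cyclic M.
  by apply: IH (proper_card propM) (good_dvd (cardG_gt0 G) gG (cardSg sMG)).
have abM : abelian M := cyclic_abelian cM.
have frob : [Frobenius G with complement M].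
  apply/andP; split; first exact: proper_neq propM.
  apply/normedTI_memJ_P; split => //.
    by apply/set0Pn; exists x; rewrite !inE ntx.
  move=> a g; rewrite !inE => /andP [nta Ma] Gg.
  apply/idP/idP; last first.
    by move=> Mg; rewrite conjg_eq1 nta groupJ.
  move=> /andP [ntag Mag]; apply/negPn/negP => nMg.
  have nMgN : g \notin 'N(M).
    apply/negP => Ng.
    have [pN|npN] := boolP ('N_G(M) \proper G).
      have := maxM' _ pN; rewrite subsetI sMG normG => /(_ isT) eqN.
      by move: nMg; rewrite -eqN inE Gg Ng.
    move: nnMG; rewrite /normal sMG /=.
    move: npN; rewrite properEneq subsetIl andbT negbK => /eqP eqN.
    by rewrite -eqN subsetIr.
  have sJG : M :^ g \subset G by rewrite -(conjGid Gg) conjSg.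
  have eqH : M <*> M :^ g = G.
    apply/eqP; rewrite eqEsubset join_subG sMG sJG /=.
    apply/negPn/negP => nsub.
    have pH : (M <*> M :^ g)%G \proper G.
      rewrite properEneq; apply/andP; split; last by rewrite /= join_subG sMG sJG.
      by apply/eqP => E; move: nsub; rewrite -{1}E subxx.
    have := maxM' _ pH; rewrite /= joing_subl => /(_ isT) eqH.
    have : M :^ g \subset M by rewrite -{2}eqH joing_subr.
    move=> sJ; move: nMgN; rewrite inE.
    suff -> : M :^ g = M by rewrite subxx.
    by apply/eqP; rewrite eqEcard sJ cardJg leqnn.
  have Zy : a ^ g \in 'Z(G).
    rewrite inE groupJ ?Gg ?(subsetP sMG _ Ma) //= -eqH /joing cent_gen centU inE.
    rewrite (subsetP abM _ Mag) /=.
    have abJ : abelian (M :^ g) by rewrite abelianJ.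
    by apply: (subsetP abJ); rewrite memJ_conjg.
  by move: Zy; rewrite Z1 inE (negPf ntag).
have [K fK] := vcharacter.Frobenius_kernel_exists frob.
have /andP [/eqP defG _] := fK.
have [nKG _ KM _ tiKM] := sdprod_context defG.
have ntK : K :!=: 1.
  apply: contra (proper_neq propM) => /eqP K1.
  by apply/eqP; rewrite -KM K1 mul1g.
have pK : K \proper G.
  rewrite properEneq normal_sub // andbT; apply: contra ntM => /eqP KG.
  by rewrite -(setIidPr sMG) -KG tiKM.
by rewrite (key_step IH nKG ntK pK gG) in ncG.
Qed.

End Main.


Section SB.
Variables (T : Type) (A : skew_brace T).
Local Notation "a ⊕ b" := (sb_add A a b) (at level 50, left associativity).
Local Notation "⊖ a" := (sb_opp A a) (at level 35, right associativity).
Local Notation "a ∘ b" := (sb_comp A a b) (at level 40, left associativity).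
Local Notation "0" := (sb_zero A).
Local Notation "1" := (sb_one A).
Local Notation inv := (sb_inv A).
Local Notation lam := (sb_lambda A).

Lemma addA a b c : a ⊕ (b ⊕ c) = a ⊕ b ⊕ c. Proof. exact: sb_addA. Qed.
Lemma add0 a : 0 ⊕ a = a. Proof. exact: sb_add0. Qed.
Lemma addNl a : ⊖ a ⊕ a = 0. Proof. exact: sb_addN. Qed.
Lemma addKl a b : ⊖ a ⊕ (a ⊕ b) = b. Proof. by rewrite addA addNl add0. Qed.
Lemma addNr a : a ⊕ ⊖ a = 0.
Proof.
have h : (a ⊕ ⊖ a) ⊕ (a ⊕ ⊖ a) = a ⊕ ⊖ a by rewrite -addA addKl.
by have := addKl (a ⊕ ⊖ a) (a ⊕ ⊖ a); rewrite h addNl.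
Qed.
Lemma addK'l a b : a ⊕ (⊖ a ⊕ b) = b. Proof. by rewrite addA addNr add0. Qed.
Lemma add0r a : a ⊕ 0 = a. Proof. by rewrite -(addNl a) addA addNr add0. Qed.
Lemma addKr a b : a ⊕ b ⊕ ⊖ b = a. Proof. by rewrite -addA addNr add0r. Qed.
Lemma addK'r a b : a ⊕ ⊖ b ⊕ b = a. Proof. by rewrite -addA addNl add0r. Qed.
Lemma addIl a b c : a ⊕ b = a ⊕ c -> b = c.
Proof. by move=> h; rewrite -(addKl a b) h addKl. Qed.
Lemma addIr a b c : b ⊕ a = c ⊕ a -> b = c.
Proof. by move=> h; rewrite -(addKr b a) h addKr. Qed.
Lemma oppK a : ⊖ ⊖ a = a.
Proof. by apply: (@addIl (⊖ a)); rewrite addNr addNl. Qed.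
Lemma oppD a b : ⊖ (a ⊕ b) = ⊖ b ⊕ ⊖ a.
Proof. by apply: (@addIl (a ⊕ b)); rewrite addNr -addA addK'l addNr. Qed.
Lemma opp0 : ⊖ 0 = 0. Proof. by rewrite -{2}(addNl 0) add0r. Qed.

Lemma compA a b c : a ∘ (b ∘ c) = a ∘ b ∘ c. Proof. exact: sb_compA. Qed.
Lemma comp1 a : 1 ∘ a = a. Proof. exact: sb_comp1. Qed.
Lemma compVl a : inv a ∘ a = 1. Proof. exact: sb_compV. Qed.
Lemma compKl a b : inv a ∘ (a ∘ b) = b. Proof. by rewrite compA compVl comp1. Qed.
Lemma compVr a : a ∘ inv a = 1.
Proof.
have h : (a ∘ inv a) ∘ (a ∘ inv a) = a ∘ inv a.
  by rewrite -compA [inv a ∘ _]compA compVl comp1.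
by have := compKl (a ∘ inv a) (a ∘ inv a); rewrite h compVl.
Qed.
Lemma comp1r a : a ∘ 1 = a. Proof. by rewrite -(compVl a) compA compVr comp1. Qed.
Lemma compK'l a b : a ∘ (inv a ∘ b) = b. Proof. by rewrite compA compVr comp1. Qed.
Lemma compIl a b c : a ∘ b = a ∘ c -> b = c.
Proof. by move=> h; rewrite -(compKl a b) h compKl. Qed.
Lemma compIr a b c : b ∘ a = c ∘ a -> b = c.
Proof. by move=> h; rewrite -(comp1r b) -(compVr a) compA h -compA compVr comp1r. Qed.
Lemma compD a b c : a ∘ (b ⊕ c) = a ∘ b ⊕ ⊖ a ⊕ a ∘ c. Proof. exact: sb_compatible. Qed.

Lemma comp0r a : a ∘ 0 = a.
Proof.
have := compD a 0 0; rewrite add0 => h.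
have := congr1 (fun x => ⊖ (a ∘ 0) ⊕ x) h; rewrite addNl -!addA addKl.
by move/(congr1 (fun x => a ⊕ x)); rewrite add0r addK'l.
Qed.
Lemma one0 : 1 = 0. Proof. by rewrite -(comp1 0) comp0r. Qed.
Lemma inv0 : inv 0 = 0. Proof. by rewrite -(comp0r (inv 0)) compVl one0. Qed.

Lemma lamE a b : lam a b = ⊖ a ⊕ a ∘ b. Proof. by []. Qed.
Lemma compE a b : a ∘ b = a ⊕ lam a b. Proof. by rewrite lamE addK'l. Qed.
Lemma lamD a b c : lam a (b ⊕ c) = lam a b ⊕ lam a c.
Proof. by rewrite !lamE compD !addA. Qed.
Lemma lam1 b : lam 0 b = b.
Proof. by rewrite lamE -one0 comp1 one0 opp0 add0. Qed.
Lemma compN a b : a ∘ ⊖ b = a ⊕ ⊖ (a ∘ b) ⊕ a.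
Proof.
have := compD a b (⊖ b); rewrite addNr comp0r => h.
apply: (@addIl (a ∘ b ⊕ ⊖ a)); rewrite -h.
by rewrite -!addA addKl addK'l.
Qed.
Lemma lamM a b c : lam (a ∘ b) c = lam a (lam b c).
Proof.
rewrite !lamE compD compN compA addKr.
by rewrite -[a ⊕ _ ⊕ _]addA addKl.
Qed.

Definition rho b a := inv (lam a b) ∘ a ∘ b.
Lemma solE a b : sb_solution A (a, b) = (lam a b, rho b a). Proof. by []. Qed.
Lemma lam_rho a b : lam a b ∘ rho b a = a ∘ b.
Proof. by rewrite /rho -compA compK'l. Qed.
Lemma lamV a b : lam (inv a) (lam a b) = b.
Proof. by rewrite -lamM compVl one0 lam1. Qed.
Lemma lamV' a b : lam a (lam (inv a) b) = b.
Proof. by rewrite -lamM compVr one0 lam1. Qed.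
Lemma rho_rho x y z : rho z (rho y x) = rho (y ∘ z) x.
Proof.
have key : lam x (y ∘ z) = lam x y ∘ lam (rho y x) z.
  by rewrite [y ∘ z]compE lamD -lamM [RHS]compE -lamM lam_rho.
apply: (@compIl (lam x (y ∘ z))).
rewrite lam_rho {1}key -compA lam_rho compA lam_rho.
by rewrite compA.
Qed.
Lemma rho1 a : rho 0 a = a.
Proof. by rewrite /rho lamE !comp0r addNl inv0 -one0 comp1. Qed.
Lemma rhoV a b : rho b (rho (inv b) a) = a.
Proof. by rewrite rho_rho compVl one0 rho1. Qed.
Lemma rhoV' a b : rho (inv b) (rho b a) = a.
Proof. by rewrite rho_rho compVr one0 rho1. Qed.

Lemma sb_is_solution : is_solution (sb_solution A).
Proof.
split.
- pose g (p : T * T) := let: (u, v) := p in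
    let c := u ∘ v in let a := c ⊕ ⊖ u in (a, inv a ∘ c).
  exists g.
    case=> a b; rewrite solE /g lam_rho.
    have -> : a ∘ b ⊕ ⊖ lam a b = a by rewrite lamE oppD oppK addK'l.
    by rewrite compKl.
  case=> u v; rewrite /g solE.
  have e1 : lam (u ∘ v ⊕ ⊖ u) (inv (u ∘ v ⊕ ⊖ u) ∘ (u ∘ v)) = u.
    by rewrite lamE compK'l oppD oppK addK'r.
  by rewrite e1 /rho e1 -compA compK'l compKl.
- case=> [[x y] z]; rewrite /Defs.r12 /Defs.r23 !solE.
  have e1 : lam (lam x y) (lam (rho y x) z) = lam x (lam y z).
    by rewrite -!lamM lam_rho.
  have e3 : rho z (rho y x) = rho (rho z y) (rho (lam y z) x).
    by rewrite !rho_rho lam_rho.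
  have e2 : rho (lam (rho y x) z) (lam x y) = lam (rho (lam y z) x) (rho z y).
    apply: (@compIl (lam (lam x y) (lam (rho y x) z))).
    apply: (@compIr (rho z (rho y x))).
    rewrite lam_rho -compA lam_rho compA lam_rho.
    rewrite e1 e3 -[in RHS]compA lam_rho [in RHS]compA lam_rho.
    by rewrite -[in RHS]compA lam_rho compA.
  by rewrite e1 e2 e3.
- move=> x; exists (lam (inv x)) => y /=; by rewrite ?lamV ?lamV'.
- move=> y; exists (rho (inv y)) => x /=; [exact: rhoV' | exact: rhoV].
Qed.
End SB.


Section Gen.
Variables (T : Type) (A : skew_brace T).
Local Notation "a ⊕ b" := (sb_add A a b) (at level 50, left associativity).
Local Notation "⊖ a" := (sb_opp A a) (at level 35, right associativity).
Local Notation "a ∘ b" := (sb_comp A a b) (at level 40, left associativity).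
Local Notation "0" := (sb_zero A).
Local Notation "1" := (sb_one A).
Local Notation inv := (sb_inv A).

Lemma triv_inv : sb_trivial A -> forall a, inv a = ⊖ a.
Proof.
move=> tr a; apply: (@addIr _ A a); rewrite addNl -tr compVl one0 //.
Qed.

Lemma brace_not_wt a b : sb_is_brace A ->
  star_with A (sb_add A) (sb_opp A) a b <> 0 -> ~ sb_weakly_trivial A.
Proof.
move=> br ne wt; apply: ne; apply: wt; first exact: sq_gen.
have -> : star_with A (sb_add A) (sb_opp A) a b =
          star_with A (fun x y => sb_add A y x) (sb_opp A) a b.
  by rewrite /star_with /= [RHS]br [sb_add A (sb_comp A a b) _]br.
exact: sq_gen.
Qed.

Definition centr (w : T) : T -> Prop := fun z => z ⊕ w = w ⊕ z.

Lemma centr0 w : centr w 0. Proof. by rewrite /centr add0 add0r. Qed.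
Lemma centrD w x y : centr w x -> centr w y -> centr w (x ⊕ y).
Proof. by rewrite /centr => hx hy; rewrite -addA hy !addA hx. Qed.
Lemma centrN w x : centr w x -> centr w (⊖ x).
Proof.
rewrite /centr => hx.
have := congr1 (fun z => ⊖ x ⊕ z ⊕ ⊖ x) hx.
by rewrite addKl -addA addKr => ->.
Qed.

Lemma nonab_not_onegen x y : sb_trivial A -> x ⊕ y <> y ⊕ x -> ~ sb_one_generator A.
Proof.
move=> tr nxy [a ha].
have subS : forall S : T -> Prop, S 0 -> (forall u v, S u -> S v -> S (u ⊕ v)) ->
    (forall u, S u -> S (⊖ u)) -> sub_skew_brace A S.
  move=> S S0 SD SN; split; split => //.
  - by rewrite one0.
  - by move=> u v Su Sv; rewrite tr; apply: SD.
  - by move=> u Su; rewrite triv_inv //; apply: SN.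
case: (classic (forall w, centr w a)) => [ca | /not_all_ex_not [w nw]].
  have := ha (fun z => forall w, centr w z).
  have : sub_skew_brace A (fun z => forall w, centr w z).
    apply: subS.
    - by move=> w; apply: centr0.
    - by move=> u v hu hv w; apply: centrD.
    - by move=> u hu w; apply: centrN.
  move=> sS /(_ sS ca x y); by [].
have := ha (centr a).
have : sub_skew_brace A (centr a).
  apply: subS; [exact: centr0 | exact: centrD | exact: centrN].
move=> sS /(_ sS) h.
have caw : centr a w by apply: h; rewrite /centr.
by apply: nw; rewrite /centr -caw.
Qed.


Lemma opA a b c : sb_add A (sb_add A c b) a = sb_add A c (sb_add A b a).
Proof. by rewrite addA. Qed.
Lemma opC a b c : a ∘ (c ⊕ b) = a ∘ c ⊕ (⊖ a ⊕ a ∘ b).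
Proof. by rewrite compD addA. Qed.

Definition op_sb : skew_brace T :=
  @SkewBrace T (fun a b => sb_add A b a) (sb_zero A) (sb_opp A) (sb_comp A)
    (sb_one A) (sb_inv A) opA (@add0r _ A) (@addNr _ A)
    (@sb_compA _ A) (@sb_comp1 _ A) (@sb_compV _ A) opC.

Lemma op_triv_at : sb_trivial op_sb -> sb_almost_trivial A.
Proof. by move=> h a b; rewrite (h a b). Qed.

Lemma at_wt : sb_almost_trivial A -> sb_weakly_trivial A.
Proof.
move=> hat x _ hx.
elim: hx => [a b | | u v _ -> _ -> | u _ ->].
- by rewrite /star_with /= hat addKr addNl.
- by [].
- by rewrite add0.
- by rewrite opp0.
Qed.

Lemma flip_triv : flip_solution (sb_solution A) -> sb_trivial_brace A.
Proof.
move=> fl.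
have tr : sb_trivial A.
  move=> a b; have := fl a b; rewrite solE => [[h _]].
  by rewrite compE h.
split => // a b.
have := fl b a; rewrite solE => [[h1 h2]].
move: h2; rewrite /rho h1 triv_inv // !tr.
move/(congr1 (fun z => a ⊕ z)); rewrite -!addA addK'l => ->.
by [].
Qed.

Lemma triv_flip : sb_trivial_brace A -> flip_solution (sb_solution A).
Proof.
move=> [br tr] a b; rewrite solE /rho.
have l : sb_lambda A a b = b by rewrite lamE tr addKl.
by rewrite l triv_inv // !tr [⊖ b ⊕ a]br addK'r.
Qed.

End Gen.


Definition addG (T : finType) (A : skew_brace T) : Type := T.
HB.instance Definition _ (T : finType) (A : skew_brace T) := Finite.on (addG A).
HB.instance Definition _ (T : finType) (A : skew_brace T) :=
  Finite_isGroup.Build (addG A) (@sb_addA _ A) (@sb_add0 _ A) (@sb_addN _ A).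
Definition compG (T : finType) (A : skew_brace T) : Type := T.
HB.instance Definition _ (T : finType) (A : skew_brace T) := Finite.on (compG A).
HB.instance Definition _ (T : finType) (A : skew_brace T) :=
  Finite_isGroup.Build (compG A) (@sb_compA _ A) (@sb_comp1 _ A) (@sb_compV _ A).

Section Seven.
Variables (T : finType) (A : skew_brace T).
Local Open Scope group_scope.

Lemma compG1 : (1 : compG A) = sb_one A. Proof. by []. Qed.
Lemma compGM (x y : compG A) : x * y = sb_comp A x y. Proof. by []. Qed.

Lemma card_compG : #|[set: compG A]| = #|T|.
Proof. by rewrite cardsT; apply: (@bij_eq_card (compG A) T id); exists id. Qed.
Lemma card_addG : #|[set: addG A]| = #|T|.
Proof. by rewrite cardsT; apply: (@bij_eq_card (addG A) T id); exists id. Qed.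

Lemma lam_inj (a : T) : injective (sb_lambda A a : addG A -> addG A).
Proof. by apply: (can_inj (g := sb_lambda A (sb_inv A a))) => x; rewrite lamV. Qed.

Lemma lam_iter (a : compG A) k (x : T) :
  iter k (sb_lambda A a) x = sb_lambda A (a ^+ k) x.
Proof.
elim: k => [|k IH] /=; first by rewrite expg0 compG1 one0 lam1.
by rewrite IH expgS compGM lamM.
Qed.

Lemma seven_two : good #|T| -> sb_trivial_brace A.
Proof.
move=> gn.
have cardG : #|[set: addG A]| = #|T|.
  by rewrite cardsT; apply: (@bij_eq_card (addG A) T id); exists id.
have cyc : cyclic [set: addG A].
  by apply: (good_cyclic (leqnn _)); rewrite cardG.
have abG := cyclic_abelian cyc.
have brace : sb_is_brace A.
  move=> a b; have := (centsP abG) (a : addG A) (in_setT _) (b : addG A) (in_setT _).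
  by [].
split => // a b.
pose p := perm (@lam_inj a).
have pAut : p \in Aut [set: addG A].
  rewrite inE; apply/andP; split; first by apply/subsetP => x; rewrite inE.
  apply/morphicP => x y _ _; rewrite !permE; exact: lamD.
have o1 : #[p] %| totient #|T|.
  by rewrite -cardG -(card_Aut_cyclic cyc) order_dvdG.
have o2 : #[p] %| #|T|.
  rewrite order_dvdn; apply/eqP/permP => x; rewrite permX perm1.
  have e : iter #|T| p x = iter #|T| (sb_lambda A a) x.
    by elim: #|T| => //= k ->; rewrite permE.
  rewrite e (lam_iter (a : compG A)).
  have -> : (a : compG A) ^+ #|T| = 1.
    have := expg_cardG (in_setT (a : compG A)); rewrite card_compG => -> //.
  by rewrite compG1 one0 lam1.
have cop := good_coprime (cardG_gt0 [set: addG A]) (eq_ind_r good gn cardG) (dvdnn _).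
rewrite cardG in cop.
have : #[p] == 1%N.
  by rewrite -dvdn1 -(eqnP cop) dvdn_gcd o2 o1.
rewrite order_eq1 => /eqP p1.
have := permE (@lam_inj a) b; rewrite -/p p1 perm1 => h.
by rewrite compE -h.
Qed.
End Seven.

Section SevenSix.
Variables (T : finType) (A : skew_brace T).
Local Open Scope group_scope.
Lemma seven_six : good #|T| -> sb_one_generator A.
Proof.
move=> gn.
have cyc : cyclic [set: addG A].
  by apply: (good_cyclic (leqnn _)); rewrite card_addG.
have [x defx] := cyclicP cyc.
exists x => S [[S0 SD SN] _] Sx y.
have : (y : addG A) \in <[x]> by rewrite -defx inE.
case/cycleP => k ->.
elim: k => [|k IH]; first by rewrite expg0.
by rewrite expgS; apply: SD.
Qed.
End SevenSix.

Module RingPart.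
Import GRing.Theory.
Local Open Scope ring_scope.

Section NilBrace.
Variables (R : comNzRingType) (c : R) (hc : c * c = 0).
Let cmp (a b : R) := a + b + c * a * b.
Let iv (a : R) := - a + c * a * a.
Lemma nb_addA (a b d : R) : a + (b + d) = a + b + d. Proof. exact: addrA. Qed.
Lemma nb_add0 (a : R) : 0 + a = a. Proof. exact: add0r. Qed.
Lemma nb_addN (a : R) : - a + a = 0. Proof. exact: addNr. Qed.
Lemma nb_compA (a b d : R) : cmp a (cmp b d) = cmp (cmp a b) d.
Proof. rewrite /cmp; ring. Qed.
Lemma nb_comp1 (a : R) : cmp 0 a = a. Proof. rewrite /cmp; ring. Qed.
Lemma nb_compV (a : R) : cmp (iv a) a = 0.
Proof.
rewrite /cmp /iv.
have -> : - a + c * a * a + a + c * (- a + c * a * a) * a = (c * c) * (a * a * a) by ring.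
by rewrite hc mul0r.
Qed.
Lemma nb_compat (a b d : R) : cmp a (b + d) = cmp a b + - a + cmp a d.
Proof. rewrite /cmp; ring. Qed.
Definition nil_sb : skew_brace R :=
  @SkewBrace R (fun a b => a + b) 0 (fun a => - a) cmp 0 iv
    nb_addA nb_add0 nb_addN nb_compA nb_comp1 nb_compV nb_compat.

Lemma nil_sb_not_wt : c != 0 -> ~ sb_weakly_trivial nil_sb.
Proof.
move=> c0; apply: (@brace_not_wt _ nil_sb 1 1).
  by move=> a b /=; rewrite addrC.
rewrite /star_with /= /cmp => h; move/eqP: c0; apply.
by rewrite -h; ring.
Qed.
End NilBrace.

Section SemiBrace.
Variables (q m : nat) (g : 'Z_q) (hg : g ^+ m = 1) (hm : (1 < m)%N).
Local Notation T := ('Z_q * 'Z_m)%type.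
Definition ex (y : 'Z_m) : 'Z_q := g ^+ (val y).
Lemma exD y z : ex (y + z) = ex y * ex z.
Proof.
rewrite /ex -exprD; have -> : val (y + z) = ((val y + val z) %% (Zp_trunc m).+2)%N.
  by [].
by rewrite expr_mod // Zp_cast.
Qed.
Lemma ex0 : ex 0 = 1. Proof. by rewrite /ex expr0. Qed.
Lemma exN y : ex (- y) * ex y = 1. Proof. by rewrite -exD addNr ex0. Qed.

Definition sd_add (a b : T) : T := (a.1 + b.1, a.2 + b.2).
Definition sd_opp (a : T) : T := (- a.1, - a.2).
Definition sd_comp (a b : T) : T := (a.1 + ex a.2 * b.1, a.2 + b.2).
Definition sd_inv (a : T) : T := (- (ex (- a.2) * a.1), - a.2).

Lemma sd_addA a b d : sd_add a (sd_add b d) = sd_add (sd_add a b) d.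
Proof. by rewrite /sd_add /= !addrA. Qed.
Lemma sd_add0 a : sd_add (0, 0) a = a.
Proof. by case: a => x y; rewrite /sd_add /= !add0r. Qed.
Lemma sd_addN a : sd_add (sd_opp a) a = (0, 0).
Proof. by rewrite /sd_add /= !addNr. Qed.
Lemma sd_addC a b : sd_add a b = sd_add b a.
Proof. by rewrite /sd_add addrC [a.2 + _]addrC. Qed.
Lemma sd_compA a b d : sd_comp a (sd_comp b d) = sd_comp (sd_comp a b) d.
Proof. rewrite /sd_comp /= exD !addrA; congr (_, _); ring. Qed.
Lemma sd_comp1 a : sd_comp (0, 0) a = a.
Proof. by case: a => x y; rewrite /sd_comp /= ex0 mul1r !add0r. Qed.
Lemma sd_compV a : sd_comp (sd_inv a) a = (0, 0).
Proof. by rewrite /sd_comp /= !addNr. Qed.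
Lemma sd_compat a b d :
  sd_comp a (sd_add b d) = sd_add (sd_add (sd_comp a b) (sd_opp a)) (sd_comp a d).
Proof. rewrite /sd_comp /sd_add /sd_opp /=; congr (_, _); ring. Qed.

Definition sd_sb : skew_brace T :=
  @SkewBrace T sd_add (0, 0) sd_opp sd_comp (0, 0) sd_inv
    sd_addA sd_add0 sd_addN sd_compA sd_comp1 sd_compV sd_compat.

Lemma sd_gcompat a b d :
  sd_comp a (sd_comp b d) = sd_comp (sd_comp (sd_comp a b) (sd_inv a)) (sd_comp a d).
Proof.
rewrite -!sd_compA; congr (sd_comp a _).
by rewrite [sd_comp (sd_inv a) _]sd_compA sd_compV sd_comp1.
Qed.

Definition sdg_sb : skew_brace T :=
  @SkewBrace T sd_comp (0, 0) sd_inv sd_comp (0, 0) sd_inv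
    sd_compA sd_comp1 sd_compV sd_compA sd_comp1 sd_compV sd_gcompat.

Hypothesis g1 : g != 1.
Lemma val1m : val (1 : 'Z_m) = 1%N.
Proof. by rewrite /= Zp_cast // modn_small. Qed.

Lemma sd_not_wt : ~ sb_weakly_trivial sd_sb.
Proof.
apply: (@brace_not_wt _ sd_sb (0, 1) (1, 0)); first exact: sd_addC.
rewrite /star_with /= /sd_add /sd_opp /sd_comp /= /ex val1m expr1 => /(congr1 fst) /= h.
have e : g - 1 = 0 by rewrite -h; ring.
by move/eqP: e; rewrite subr_eq0 (negPf g1).
Qed.

Lemma sdg_not_onegen : ~ sb_one_generator sdg_sb.
Proof.
apply: (@nonab_not_onegen _ sdg_sb (0, 1) (1, 0)); first by [].
rewrite /= /sd_comp /= /ex val1m expr1 => /(congr1 fst) /=.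
rewrite expr0 !mul1r mulr1 !add0r addr0 => h.
by move: g1; rewrite h eqxx.
Qed.
End SemiBrace.


Lemma card_Zp_type k : (1 < k)%N -> #|{: 'Z_k}| = k.
Proof. by move=> k1; rewrite card_ord Zp_cast. Qed.

Lemma Zp_mulrn_char k d (x : 'Z_k) : (1 < k)%N -> (k %| d)%N -> x *+ d = 0.
Proof.
move=> k1 /dvdnP [e ->]; rewrite mulnC mulrnA.
have -> : x *+ k = 0 by rewrite -mulr_natr pchar_Zp // mulr0.
by rewrite mul0rn.
Qed.

Lemma mulrn_mod (V : zmodType) (x : V) k d : x *+ d = 0 -> x *+ k = x *+ (k %% d).
Proof.
move=> h; rewrite {1}(divn_eq k d) mulrnDr mulnC mulrnA h mul0rn add0r //.
Qed.

Section AbCount.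
Variables (p m : nat) (p1 : (1 < p)%N) (m1 : (1 < m)%N) (pm : (p %| m)%N).
Local Notation T := ('Z_p * 'Z_m)%type.
Definition ab_sb := sd_sb (q := p) (g := 1) (expr1n _ m) m1.

Lemma ab_card : #|{: T}| = (p * m)%N.
Proof. by rewrite card_prod !card_Zp_type. Qed.

Lemma ab_not_onegen : ~ sb_one_generator ab_sb.
Proof.
move=> [a ha].
have m0 : (0 < m)%N by apply: ltnW.
have mz1 : forall x : 'Z_p, x *+ m = 0 by move=> x; apply: Zp_mulrn_char.
have mz2 : forall x : 'Z_m, x *+ m = 0 by move=> x; apply: Zp_mulrn_char.
pose f (k : 'I_m) : T := (a.1 *+ k, a.2 *+ k).
pose S := fun x : T => exists k : 'I_m, x = f k.
have exE : forall y : 'Z_m, ex (q := p) 1 y = 1 by move=> y; rewrite /ex expr1n.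
have SD : forall u v, S u -> S v -> S (sd_add u v).
  move=> u v [i ->] [j ->]; exists (Ordinal (ltn_pmod (i + j) m0)).
  by rewrite /f /sd_add /= -!mulrnDr (mulrn_mod _ (mz1 _)) (mulrn_mod _ (mz2 _)).
have SN : forall u, S u -> S (sd_opp u).
  move=> u [i ->]; exists (Ordinal (ltn_pmod (m - i) m0)).
  rewrite /f /sd_opp /= -(mulrn_mod _ (mz1 _)) -(mulrn_mod _ (mz2 _)).
  have e : forall (V : zmodType) (x : V), x *+ m = 0 -> - (x *+ i) = x *+ (m - i).
    move=> V x h; apply/eqP; rewrite eq_sym -subr_eq0 opprK -mulrnDr subnK //.
    by rewrite h. by apply: ltnW.
  by rewrite !e.
have S0 : S (0, 0) by exists (Ordinal m0); rewrite /f /= !mulr0n.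
have sub : sub_skew_brace ab_sb S.
  split; split => //=.
  - move=> u v Su Sv; have -> : sd_comp 1 u v = sd_add u v.
      by rewrite /sd_comp /sd_add exE mul1r.
    exact: SD.
  - move=> u Su; have -> : sd_inv 1 u = sd_opp u by rewrite /sd_inv exE mul1r.
    exact: SN.
have Sa : S a by exists (Ordinal m1); rewrite /f /= !mulr1n; case: a {ha f S SD SN S0 sub}.
have all := ha S sub Sa.
have : (#|{: T}| <= #|'I_m|)%N.
  have -> : #|{: T}| = #|codom f|.
    apply/eqP; rewrite eqn_leq; apply/andP; split; last exact: max_card.
    apply: subset_leq_card; apply/subsetP => x _; have [k ->] := all x.
    exact: codom_f.
  exact: leq_image_card.
rewrite ab_card card_ord leqNgt.
by rewrite -{1}(mul1n m) ltn_mul2r p1 m0.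
Qed.
End AbCount.

End RingPart.
Import RingPart.


Module P6.
Import GRing.Theory.
Lemma not_good_cases n : 0 < n -> ~ good n ->
  (exists p k, prime p /\ n = k * p ^ 2) \/
  (exists p q, [/\ prime p, prime q, p %| n, q %| n & p != q /\ p %| q.-1]).
Proof.
move=> n0 ng; case: (classic (forall p, prime p -> p %| n -> logn p n = 1)) => h1.
  right; apply: NNPP => h2; apply: ng; split => // p q pp qp pn qn pq.
  apply/negP => d; apply: h2; exists p, q; split => //.
left; have [p hp] := not_all_ex_not _ _ h1.
have [pp hp'] := imply_to_and _ _ hp.
have [pn ln] := imply_to_and _ _ hp'.
have l1 : 0 < logn p n by rewrite logn_gt0 mem_primes pp n0.
have l2 : 2 <= logn p n by move: l1 ln; case: (logn p n) => [|[|]].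
have /dvdnP [k ->] : p ^ 2 %| n by rewrite pfactor_dvdn.
by exists p, k.
Qed.

Lemma exists_g q p : prime q -> prime p -> p %| q.-1 ->
  exists g : 'Z_q, (g ^+ p = 1)%R /\ g != 1%R.
Proof.
move=> qp pp pq.
have q0 : 0 < q := prime_gt0 qp.
have : p %| #|units_Zp q| by rewrite card_units_Zp // totient_prime.
move/(Cauchy pp) => [x _ ox].
exists (val x); split.
  by rewrite -FinRing.val_unitX -ox expg_order.
apply/eqP => x1.
have : x = 1%g by apply: val_inj; rewrite x1.
move=> e; move: ox; rewrite e order1 => p1.
by move: (prime_gt1 pp); rewrite -p1.
Qed.

Lemma exists_bad n : 0 < n -> ~ good n ->
  (exists (T : finType) (A : skew_brace T), #|T| = n /\ ~ sb_weakly_trivial A) /\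
  (exists (T : finType) (A : skew_brace T), #|T| = n /\ ~ sb_one_generator A).
Proof.
move=> n0 ng; case: (not_good_cases n0 ng) => [[p [k [pp nE]]] | [p [q [pp qp pn qn [pq pq1]]]]].
  have p1 := prime_gt1 pp.
  have k0 : 0 < k by move: n0; rewrite nE; nia.
  have n1 : 1 < n by rewrite nE; nia.
  split.
    pose c : 'Z_n := ((k * p)%:R)%R.
    have hc : (c * c = 0)%R.
      rewrite /c -natrM.
      have -> : (k * p * (k * p) = k * n)%N by rewrite nE; nia.
      by rewrite natrM pchar_Zp // GRing.mulr0.
    have c0 : c != 0%R.
      apply/eqP => /(congr1 (@nat_of_ord _)); rewrite /c val_Zp_nat // modn_small /=.
        by apply/eqP; rewrite -lt0n; nia.
      rewrite nE; nia.
    exists ('Z_n : finType), (nil_sb hc); split; first by rewrite card_Zp_type.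
    exact: nil_sb_not_wt.
  have m1 : 1 < k * p by nia.
  have pm : p %| k * p by apply: dvdn_mull.
  exists (('Z_p * 'Z_(k * p))%type : finType), (ab_sb p m1); split.
    by rewrite ab_card // nE; nia.
  exact: (ab_not_onegen p1 pm).
have q1 := prime_gt1 qp; have p1 := prime_gt1 pp.
have [m nE] := dvdnP qn.
have pm : p %| m.
  by rewrite -(Gauss_dvdl m (_ : coprime p q)) -?nE // prime_coprime // dvdn_prime2.
have m0 : 0 < m by move: n0; rewrite nE; nia.
have m1 : 1 < m by apply: leq_trans p1 (dvdn_leq m0 pm).
have [g [gp g1]] := exists_g qp pp pq1.
have gm : (g ^+ m = 1)%R.
  by rewrite -(divnK pm) mulnC GRing.exprM gp GRing.expr1n.
have cardT : #|{: 'Z_q * 'Z_m}| = n by rewrite card_prod !card_Zp_type // nE mulnC.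
split.
  exists (('Z_q * 'Z_m)%type : finType), (sd_sb gm m1); split => //.
  exact: sd_not_wt.
exists (('Z_q * 'Z_m)%type : finType), (sdg_sb gm m1); split => //.
exact: sdg_not_onegen.
Qed.

End P6.
Import P6.

Theorem theorem4p1 (n : nat) (n_gt0 : 0 < n) :
  [<->
    (* (1) *)
    (forall (X : Type) (r : X * X -> X * X),
        sb_solution_of_card n r -> flip_solution r);
    (* (2) *)
    (forall (T : finType) (A : skew_brace T), #|T| = n -> sb_trivial_brace A);
    (* (3) *)
    (forall (T : finType) (A : skew_brace T), #|T| = n -> sb_trivial A);
    (* (4) *)
    (forall (T : finType) (A : skew_brace T), #|T| = n -> sb_almost_trivial A);
    (* (5) *)
    (forall (T : finType) (A : skew_brace T), #|T| = n -> sb_weakly_trivial A);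
    (* (6) *)
    (forall (T : finType) (A : skew_brace T), #|T| = n -> sb_one_generator A);
    (* (7) *)
    ((forall p, prime p -> p %| n -> logn p n = 1) /\
     (forall p q, prime p -> prime q -> p %| n -> q %| n -> p != q ->
        ~~ (p %| q.-1)))].
Proof.
tfae.
- move=> h1 T A cT; apply: flip_triv; apply: (h1 T (sb_solution A)).
  split; first exact: sb_is_solution.
  exists T, A; split => //.
  by exists id; split; [exists id | move=> x y].
- by move=> h2 T A cT; case: (h2 T A cT).
- by move=> h3 T A cT; apply: op_triv_at; apply: (h3 T (op_sb A) cT).
- by move=> h4 T A cT; apply: at_wt; apply: h4.
- move=> h5; have gn : good n.
    apply: NNPP => ng; have [[T [A [cT nw]]] _] := exists_bad n_gt0 ng.
    exact: nw (h5 T A cT).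
  by move=> T A cT; apply: seven_six; rewrite cT.
- move=> h6; apply: NNPP => ng; have [_ [T [A [cT no]]]] := exists_bad n_gt0 ng.
  exact: no (h6 T A cT).
- move=> h7 X r [_ [T [A [cT [f [bf hf]]]]]] x y.
  have tb : sb_trivial_brace A by apply: seven_two; rewrite cT.
  have := hf x y; rewrite (triv_flip tb) => e.
  have finj := bij_inj bf.
  have e1 := congr1 fst e; have e2 := congr1 snd e; simpl in e1, e2.
  rewrite [r (x, y)]surjective_pairing -(finj _ _ e1) -(finj _ _ e2) //.
Qed.
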